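(* Let $A=KQ/I$ be a linear Nakayama algebra with vertices $Q_0=\{1,\ldots,n\}$ labelled canonically $1\to2\to\cdots\to n$, and let $i\in Q_0$ with $e(S_i)\ge 2$. Then there exists an indecomposable $A$-module $M$ with a minimal injective coresolution $0\to M\to I^0\to\cdots\to I^d\to 0$ such that $I^d\cong I(i)$, $d=\operatorname{idim}M=e(S_i)-1$, and moreover $$\underline{\dim}(M)_{[1:\hat h(i)-1]}=r_j(\omega_A,\hat h(i)-1)\quad\text{and}\quad \underline{\dim}(M)_{[\hat h(i):n]}=0$$ for some $j>i$. In particular, $M$ has no composition factor $S_\ell$ with $\ell\ge \hat h(i)$.
   Context: A linear Nakayama algebra is $A=KQ/I$ with $K$ a field, $Q$ the quiver $1\to2\to\cdots\to n$ and $I$ admissible. Modules are finitely generated right modules; $S_i$, $I(i)=D(Ae_i)$ denote simple and indecomposable injective modules, $I(S)$ the injective envelope of $S$, $\Omega$ the syzygy. For a simple $S$, $e(S)=\min\{\operatorname{pdim}S,\operatorname{pdim}I(S)\}$; $N(S)=S$ if $e(S)$ is odd and $N(S)=I(S)$ if $e(S)$ is even; $h(S)=\operatorname{top}\Omega^{e(S)}(N(S))$ (a simple module), and $\hat h(i)=j$ if $h(S_i)\cong S_j$. The Cartan matrix is $\omega_A=(\dim_K e_jAe_i)_{i,j}$ (its $j$-th row is $\underline{\dim}\,I(j)$). For an $n\times n$ matrix $B$, $r_j(B,k)$ denotes the vector of the first $k$ entries of the $j$-th row of $B$; for a vector $v=(v_1,\ldots,v_n)$, $v_{[a:b]}=(v_a,\ldots,v_b)$.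 $\underline{\dim}(M)$ is the dimension vector of $M$. *)

(* Defs.v *)
(* Combinatorial model of a linear Nakayama
   algebra A = KQ/I, Q : 1 -> 2 -> ... -> n, via its Kupisch series
   c k = dim_K P(k) = dim_K e_k A. *)
From mathcomp Require Import all_boot.
Set Implicit Arguments. Unset Strict Implicit. Unset Printing Implicit Defensive.

(* c is the Kupisch series of a linear Nakayama algebra with n vertices:
   P(n) = S_n, every arrow k -> k+1 is nonzero in A (I admissible),
   and c k <= c (k+1) + 1. *)
Definition kupisch (n : nat) (c : nat -> nat) : Prop :=
  0 < n /\ c n = 1 /\ (forall k, 1 <= k < n -> 2 <= c k <= (c k.+1).+1).

(* An indecomposable (= uniserial) right A-module is the interval module
   M = (a, b), 1 <= a <= b <= n, with top S_a, socle S_b and composition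
   factors S_a, ..., S_b; it exists iff b - a + 1 <= c a. *)
Definition imod := (nat * nat)%type.

Definition ind_mod (n : nat) (c : nat -> nat) (M : imod) : bool :=
  [&& 1 <= M.1 <= M.2, M.2 <= n & M.2 - M.1 < c M.1].

Definition Pmod (c : nat -> nat) (i : nat) : imod := (i, (i + c i).-1).
Definition Imod (c : nat -> nat) (j : nat) : imod :=
  (head j [seq a <- iota 1 j | j < a + c a], j).

(* Syzygy (kernel of the projective cover P(top M) -> M) and cosyzygy
   (cokernel of the injective envelope M -> I(soc M)); None = zero module. *)
Definition syz (c : nat -> nat) (M : imod) : option imod :=
  if M.2.+1 < M.1 + c M.1 then Some (M.2.+1, (M.1 + c M.1).-1) else None.
Definition cosyz (c : nat -> nat) (M : imod) : option imod :=
  let a' := (Imod c M.2).1 in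
  if a' < M.1 then Some (a', M.1.-1) else None.

Definition Omega (c : nat -> nat) (k : nat) (M : imod) : option imod :=
  iter k (obind (syz c)) (Some M).
Definition coOmega (c : nat -> nat) (k : nat) (M : imod) : option imod :=
  iter k (obind (cosyz c)) (Some M).

(* Both are < n for linear Nakayama
   algebras (the top index strictly increases along syzygies, the socle
   index strictly decreases along cosyzygies), so the search range
   0..n is exhaustive. *)
Definition pdim (n : nat) (c : nat -> nat) (M : imod) : nat :=
  find (fun d => Omega c d.+1 M == None) (iota 0 n.+1).
Definition idim (n : nat) (c : nat -> nat) (M : imod) : nat :=
  find (fun d => coOmega c d.+1 M == None) (iota 0 n.+1).

(* k-th term I^k of the minimal injective coresolution of M:
   the injective envelope I(soc Omega^{-k} M) of Omega^{-k} M. *)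
Definition inj_term (c : nat -> nat) (M : imod) (k : nat) : option imod :=
  omap (fun N : imod => Imod c N.2) (coOmega c k M).

Definition eS (n : nat) (c : nat -> nat) (i : nat) : nat :=
  minn (pdim n c (i, i)) (pdim n c (Imod c i)).
Definition NS (n : nat) (c : nat -> nat) (i : nat) : imod :=
  if odd (eS n c i) then (i, i) else Imod c i.
Definition hhat (n : nat) (c : nat -> nat) (i : nat) : nat :=
  if Omega c (eS n c i) (NS n c i) is Some N then N.1 else 0.

(* Cartan matrix (1-based): cartan i j = dim_K e_j A e_i = number of
   nonzero paths j -> i in A, i.e. 1 iff j <= i <= j + c j - 1. *)
Definition cartan (c : nat -> nat) (i j : nat) : nat :=
  (j <= i) && (i < j + c j).

Definition rowseg (B : nat -> nat -> nat) (j k : nat) : seq nat :=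
  [seq B j l | l <- iota 1 k].

Definition dimv (M : imod) (k : nat) : nat := (M.1 <= k <= M.2).
Definition dimseg (M : imod) (a b : nat) : seq nat :=
  [seq dimv M l | l <- iota a (b.+1 - a)].

(* Main.v *)
Require Import Defs.
From mathcomp Require Import all_boot.
From mathcomp Require Import zify.
Set Implicit Arguments. Unset Strict Implicit.

Definition GG (c : nat -> nat) x := x + c x.
Definition sf (c : nat -> nat) b := (Imod c b).1.

Fixpoint rec2 (f : nat -> nat) (x0 x1 : nat) (k : nat) : nat :=
  match k with 0 => x0 | S k' => match k' with 0 => x1 | S k'' => f (rec2 f x0 x1 k'') end end.

Section K.
Variables (n : nat) (c : nat -> nat).
Hypothesis Hk : kupisch n c.

Lemma kup x : 1 <= x < n -> 2 <= c x <= (c x.+1).+1.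
Proof. by case: Hk => _ [_ H]; apply: H. Qed.

Lemma cpos x : 1 <= x <= n -> 1 <= c x.
Proof.
move=> Hx; case: Hk => [Hn [Hcn _]].
case: (ltngtP x n) => [lt|gt|->]; last by rewrite Hcn.
- have := kup (x:=x); lia.
- lia.
Qed.

Lemma Gmono x y : 1 <= x -> x <= y -> y <= n -> GG c x <= GG c y.
Proof.
move=> H1; elim: y => [|y IH] Hxy Hy; first lia.
case: (ltngtP x y.+1) => [lt|gt|<-] //; last lia.
have := IH ltac:(lia) ltac:(lia); have := kup (x:=y) ltac:(lia).
rewrite /GG; lia.
Qed.

Lemma Gle x : 1 <= x <= n -> GG c x <= n.+1.
Proof.
move=> Hx; have := @Gmono x n ltac:(lia) ltac:(lia) (leqnn n).
case: Hk => [_ [Hcn _]]; rewrite /GG Hcn; lia.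
Qed.

Lemma Ggt x : 1 <= x <= n -> x < GG c x.
Proof. move=> Hx; have := cpos Hx; rewrite /GG; lia. Qed.

Lemma head_filter_nth (T : Type) (x0 : T) p (s : seq T) :
  head x0 (filter p s) = nth x0 s (find p s).
Proof. elim: s => //= x s IH; by case: (p x). Qed.

Lemma s_spec b : 1 <= b <= n ->
  [/\ 1 <= sf c b <= b, b < GG c (sf c b) & forall a, 1 <= a < sf c b -> GG c a <= b].
Proof.
move=> Hb.
set p := fun a => b < a + c a.
have Hs : sf c b = nth b (iota 1 b) (find p (iota 1 b)) by rewrite /sf /= head_filter_nth.
have hasp : has p (iota 1 b).
  apply/hasP; exists b; first by rewrite mem_iota; lia.
  by rewrite /p; have := cpos Hb; lia.
have Hf : find p (iota 1 b) < b by move: hasp; rewrite has_find size_iota.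
have Hs' : sf c b = (find p (iota 1 b)).+1 by rewrite Hs nth_iota // add1n.
split.
- rewrite Hs'; lia.
- by have := nth_find b hasp; rewrite -Hs.
- move=> a Ha.
  have := @before_find _ b p (iota 1 b) a.-1 ltac:(lia).
  rewrite nth_iota; last lia.
  rewrite /p /GG; have -> : 1 + a.-1 = a by lia.
  lia.
Qed.

Lemma galois b x : 1 <= b <= n -> 1 <= x <= n -> (sf c b <= x) = (b < GG c x).
Proof.
move=> Hb Hx; have [H1 H2 H3] := s_spec Hb.
apply/idP/idP => H.
- have := @Gmono (sf c b) x ltac:(lia) H ltac:(lia); lia.
- rewrite leqNgt; apply/negP => Hlt.
  have := H3 x ltac:(lia); lia.
Qed.

Lemma s_ge1 b : 1 <= b <= n -> 1 <= sf c b.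
Proof. by move=> Hb; have [H1 _ _] := s_spec Hb; lia. Qed.
Lemma s_le b : 1 <= b <= n -> sf c b <= b.
Proof. by move=> Hb; have [H1 _ _] := s_spec Hb; lia. Qed.
Lemma s_gt b : 1 <= b <= n -> b < GG c (sf c b).
Proof. by move=> Hb; have [_ H _] := s_spec Hb. Qed.


Lemma Omega_T x0 y0 k : Omega c k (x0, y0) <> None ->
  (forall j, j < k -> rec2 (GG c) x0 y0.+1 j.+1 < rec2 (GG c) x0 y0.+1 j.+2) /\
  Omega c k (x0, y0) = Some (rec2 (GG c) x0 y0.+1 k, (rec2 (GG c) x0 y0.+1 k.+1).-1).
Proof.
set T := rec2 (GG c) x0 y0.+1.
elim: k => [|k IH] H; first by split.
have HO : Omega c k.+1 (x0, y0) = obind (syz c) (Omega c k (x0, y0)) by rewrite /Omega iterS.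
case E: (Omega c k (x0, y0)) => [N|]; last by move: H; rewrite HO E.
have [IH1 IH2] := IH ltac:(by rewrite E).
move: H; rewrite HO IH2 /= /syz /=.
have T1 : 1 <= T k.+1.
  case: k {IH E HO IH2} IH1 => [|k] IH1; first by rewrite /T /=.
  have := IH1 k (ltnSn k); lia.
have -> : (T k.+1).-1.+1 = T k.+1 by lia.
have -> : T k.+2 = T k + c (T k) by [].
case: ifP => // Hlt _; split => // j Hj.
case: (ltngtP j k) => [lt|gt|->]; [exact: IH1| lia | by []].
Qed.

Lemma pdim_ge X e : 1 <= e -> e <= pdim n c X -> Omega c e X <> None.
Proof.
move=> He Hp.
have Hs : pdim n c X <= n.+1 by rewrite /pdim -{2}(size_iota 0 n.+1) find_size.
have := @before_find _ 0 (fun d => Omega c d.+1 X == None) (iota 0 n.+1) e.-1 ltac:(rewrite /pdim in Hp; lia).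
rewrite nth_iota; last lia.
rewrite add0n prednK //.
by move/eqP.
Qed.

Lemma seq_lb x0 x1 k : 1 <= x0 -> 1 <= x1 -> 1 <= rec2 (GG c) x0 x1 k.
Proof.
move=> H0 H1; elim: k {-2}k (leqnn k) => [|m IH] [|[|k]] Hkm //=.
have := IH k ltac:(lia); rewrite /GG; lia.
Qed.

Lemma seq_ub x0 x1 e : 1 <= x0 <= n -> 1 <= x1 ->
  (forall j, j < e -> rec2 (GG c) x0 x1 j.+1 < rec2 (GG c) x0 x1 j.+2) ->
  forall k, k <= e -> rec2 (GG c) x0 x1 k <= n.
Proof.
move=> H0 H1 Hch; elim => [|k IH] Hke; first by rewrite /=; lia.
have := Hch k Hke.
have -> : rec2 (GG c) x0 x1 k.+2 = GG c (rec2 (GG c) x0 x1 k) by [].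
have := @Gle (rec2 (GG c) x0 x1 k); have := @seq_lb x0 x1 k ltac:(lia) H1.
have := IH ltac:(lia); lia.
Qed.

Lemma cosyz_eq a b : cosyz c (a, b) = if sf c b < a then Some (sf c b, a.-1) else None.
Proof. by []. Qed.

Lemma map_zero (f : nat -> nat) (q : seq nat) :
  (forall l, l \in q -> f l = 0) -> map f q = nseq (size q) 0.
Proof.
elim: q => //= x q IH H; rewrite H ?mem_head // IH // => l Hl.
by apply: H; rewrite in_cons Hl orbT.
Qed.

Lemma main i : 1 <= i <= n -> 2 <= eS n c i ->
  exists M : imod,
    [/\ ind_mod n c M,
        inj_term c M (idim n c M) = Some (Imod c i),
        idim n c M = (eS n c i).-1,
        (exists j, [/\ i < j <= n,
            dimseg M 1 (hhat n c i).-1 = rowseg (cartan c) j (hhat n c i).-1 &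
            dimseg M (hhat n c i) n = nseq (n.+1 - hhat n c i) 0])
      & forall l, hhat n c i <= l -> dimv M l = 0].
Proof.
move=> Hi He.
set e := eS n c i.
set s := sf c.
set T := rec2 (GG c) (s i) i.+1.
set U := rec2 (GG c) i i.+1.
have EI : Imod c i = (s i, i) by [].
have Hsi1 : 1 <= s i by apply: s_ge1.
have Hsi2 : s i <= i by apply: s_le.
have HpS : e <= pdim n c (i,i) by rewrite /e /eS geq_minl.
have HpI : e <= pdim n c (Imod c i) by rewrite /e /eS geq_minr.
have [HU OU] := Omega_T (pdim_ge (X:=(i,i)) (e:=e) ltac:(lia) HpS).
have [HT OT] := Omega_T (pdim_ge (X:=(s i,i)) (e:=e) ltac:(lia) ltac:(by rewrite -EI)).
rewrite -/T in HT OT; rewrite -/U in HU OU.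
have Tlb : forall k, 1 <= T k by move=> k; apply: seq_lb.
have Ulb : forall k, 1 <= U k by move=> k; apply: seq_lb; lia.
have Tub : forall k, k <= e -> T k <= n by apply: seq_ub => //; lia.
have Uub : forall k, k <= e -> U k <= n by apply: seq_ub => //; lia.
have Todd : forall m, T m.*2.+1 = U m.*2.+1.
  elim=> [|m IH] //; rewrite doubleS.
  have -> : T m.*2.+3 = GG c (T m.*2.+1) by [].
  have -> : U m.*2.+3 = GG c (U m.*2.+1) by [].
  by rewrite IH.
have Teven : forall m, m.*2 <= e -> T m.*2 <= U m.*2.
  elim=> [|m IH]; first by move=> _; rewrite /T /U /=.
  rewrite doubleS => Hm.
  have -> : T m.*2.+2 = GG c (T m.*2) by [].
  have -> : U m.*2.+2 = GG c (U m.*2) by [].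
  apply: Gmono => //; first by apply: IH; lia.
  by apply: Uub; lia.
have TleU : forall k, k <= e -> T k <= U k.
  move=> k Hke; have := odd_double_half k.
  case: (odd k) => /= Hk2.
  - by rewrite -Hk2 Todd.
  - by rewrite -Hk2 add0n in Hke *; apply: Teven.
have L : forall k, 1 <= k <= e -> U k < T k.+1.
  move=> k Hk1; have := odd_double_half k.
  have HTk := HT k.-1 ltac:(lia); have HUk := HU k.-1 ltac:(lia).
  rewrite !prednK in HTk HUk; try lia.
  case: (odd k) => /= Hk2.
  - have -> : U k = T k by rewrite -Hk2 Todd.
    done.
  - have -> : T k.+1 = U k.+1 by rewrite -Hk2 add0n Todd.
    done.
have Hh : hhat n c i = T e.
  rewrite /hhat /NS -/e; case Ho: (odd e).
  - rewrite OU /=; have := odd_double_half e; rewrite Ho /= => <-.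
    by rewrite Todd.
  - by rewrite EI OT.
rewrite Hh.
set d := e.-1.
have Hde : e = d.+1 by lia.
have Hde2 : e = (d.-1).+2 by lia.
set h := T e.
set y := (T e.+1).-1.
set t := s y.
have HTe1 : T e.+1 = GG c (T d) by rewrite Hde.
have HTd : 1 <= T d <= n by rewrite Tlb Tub //; lia.
have HTee : T e < T e.+1 by have := HT d ltac:(lia); rewrite -Hde.
have Hy : 1 <= y <= n.
  have := Gle HTd; rewrite -HTe1 /y; have := Tlb e; lia.
have Ht1 : 1 <= t by apply: s_ge1.
have HtTd : t <= T d by rewrite /t galois // -HTe1 /y; have := Tlb e; lia.
have HUt : U d.-1 < t.
  rewrite ltnNge /t galois //; last by rewrite Ulb Uub //; lia.
  have -> : GG c (U d.-1) = U e by rewrite Hde2.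
  have := L e ltac:(lia); rewrite /y; lia.
set b := rec2 (fun z => (s z).-1) h.-1 t.-1.
have Iv : forall j, (j <= d -> U (d - j) <= b j < T (d.+1 - j)) /\
                    (j.+1 <= d -> U (d - j.+1) <= b j.+1 < T (d.+1 - j.+1)).
  elim=> [|j IH].
  - split => Hj.
    + rewrite !subn0 /b /= -Hde /h; have := L d ltac:(lia); rewrite -Hde.
      have := Tlb e; lia.
    + have -> : d - 1 = d.-1 by lia.
      have -> : d.+1 - 1 = d by lia.
      rewrite /b /=; lia.
  - case: IH => IH1 IH2; split => // Hj.
    have /andP[Hb1 Hb2] := IH1 ltac:(lia).
    set m := d - j.+2.
    have E1 : d - j = m.+2 by lia.
    have E2 : d.+1 - j = m.+3 by lia.
    have E3 : d.+1 - j.+2 = m.+1 by lia.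
    rewrite E1 E2 in Hb1 Hb2; rewrite E3.
    have -> : b j.+2 = (s (b j)).-1 by [].
    have Hbj : 1 <= b j <= n.
      have := Ulb m.+2; have := Tub m.+3 ltac:(lia); lia.
    change (U m.+2) with (GG c (U m)) in Hb1.
    change (T m.+3) with (GG c (T m.+1)) in Hb2.
    have HTm : 1 <= T m.+1 <= n by rewrite Tlb Tub //; lia.
    have HUm : 1 <= U m <= n by rewrite Ulb Uub //; lia.
    have A1 : s (b j) <= T m.+1 by rewrite /s galois.
    have A2 : ~~ (s (b j) <= U m) by rewrite /s galois // -leqNgt.
    have := s_ge1 Hbj; rewrite -/s; lia.
have Hbb : forall j, j <= d -> 1 <= b j <= n.
  move=> j Hj; have /andP[H1 H2] := (Iv j).1 Hj.
  have := Ulb (d - j); have := Tub (d.+1 - j) ltac:(lia); lia.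
have Hstr : forall j, j < d -> s (b j) <= b j.+1.
  move=> j Hj.
  have /andP[H1 H2] := (Iv j).1 ltac:(lia).
  have /andP[H3 H4] := (Iv j.+1).1 ltac:(lia).
  rewrite /s galois; try by apply: Hbb; lia.
  have E1 : d.+1 - j = (d - j.+1).+2 by lia.
  rewrite E1 in H2.
  have := TleU (d - j.+1).+2 ltac:(lia).
  have := @Gmono (U (d - j.+1)) (b j.+1) (Ulb _) H3 ltac:(have := Hbb j.+1; lia).
  have -> : GG c (U (d - j.+1)) = U (d - j.+1).+2 by [].
  lia.
have Hbd : b d = i.
  have := (Iv d).1 (leqnn d); rewrite subnn subSnn /U /T /=; lia.
have Hsd : s (b d.-1) <= s i.
  have /andP[_ H2] := (Iv d.-1).1 ltac:(lia).
  have E1 : d.+1 - d.-1 = 2 by lia.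
  rewrite E1 in H2.
  rewrite /s galois; first exact: H2.
  - by apply: Hbb; lia.
  - rewrite -/s; lia.
have Hco : forall k, k <= d -> coOmega c k (t, h.-1) = Some ((b k.+1).+1, b k).
  elim=> [|k IH] Hkd.
  - by rewrite /coOmega /= /b /=; congr (Some (_, _)); lia.
  - rewrite /coOmega iterS -/(coOmega c k (t, h.-1)) IH; last lia.
    rewrite /= cosyz_eq -/s.
    have := Hstr k Hkd; have := s_ge1 (Hbb k ltac:(lia)); rewrite -/s => H1 H2.
    rewrite ifT; last lia.
    have -> : b k.+2 = (s (b k)).-1 by [].
    congr (Some (_, _)); lia.
have HcoN : coOmega c d.+1 (t, h.-1) = None.
  rewrite /coOmega iterS -/(coOmega c d (t, h.-1)) Hco // /= cosyz_eq -/s Hbd.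
  have -> : b d.+1 = (s (b d.-1)).-1 by rewrite -(prednK (_ : 0 < d)) //; lia.
  have := s_ge1 (Hbb d.-1 ltac:(lia)); rewrite -/s => H1.
  rewrite ifF //; apply/negbTE; rewrite -leqNgt; lia.
have Hid : idim n c (t, h.-1) = d.
  have Hdn : d < n.+1.
    have := Tub d.+1 ltac:(lia); have : forall k, 1 <= k -> k <= e -> k <= T k.
      elim=> [|k IHk] //= Hk1 Hk2.
      case: k IHk Hk1 Hk2 => [|k] IHk _ Hk2; first by rewrite /T /=.
      have := IHk isT ltac:(lia); have := HT k ltac:(lia); lia.
    move=> /(_ d.+1 isT ltac:(lia)); lia.
  rewrite /idim.
  set P := fun d0 => coOmega c d0.+1 (t, h.-1) == None.
  have HPd : P d by rewrite /P HcoN.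
  have Hhas : has P (iota 0 n.+1).
    by apply/hasP; exists d => //; rewrite mem_iota; lia.
  apply/eqP; rewrite eqn_leq; apply/andP; split.
  - rewrite leqNgt; apply/negP => Hlt.
    have := before_find 0 Hlt; rewrite nth_iota // add0n HPd //.
  - rewrite leqNgt; apply/negP => Hlt.
    have := nth_find 0 Hhas; rewrite nth_iota; last by lia.
    rewrite add0n /P Hco //; lia.
have HTm : forall k, 1 <= k -> k <= e.+1 -> i < T k.
  elim=> [|k IHk] // Hk1 Hk2.
  case: k IHk Hk1 Hk2 => [|k] IHk _ Hk2; first by rewrite /T /=.
  have := IHk isT ltac:(lia); have := HT k ltac:(lia); lia.
have HTdd : T d < T e by rewrite Hde; have := HT d.-1 ltac:(lia); rewrite prednK //; lia.
have Hhn : h <= n by apply: Tub.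
have Hhi : i < h by apply: HTm; lia.
have Htn : 1 <= t <= n by lia.
have HGt : h < GG c t.
  have := s_gt Hy; rewrite -/s -/t /y; lia.
set j := (GG c t).-1.
have Hjn : 1 <= j <= n by have := Gle Htn; rewrite /j; lia.
have Hsj1 : 1 <= s j <= n by have := s_ge1 Hjn; have := s_le Hjn; rewrite -/s; lia.
have Hsj : s j = t.
  apply/eqP; rewrite eqn_leq; apply/andP; split.
  - have := galois Hjn Htn; rewrite -/s => ->; rewrite /j; lia.
  - have := galois Hy Hsj1; rewrite -/s -/t => ->.
    have := s_gt Hjn; rewrite -/s; have := s_gt Hy; rewrite -/s -/t /j; lia.
exists (t, h.-1); split.
- rewrite /ind_mod /=; apply/and3P; split; [lia|lia|].
  have := HGt; rewrite /GG; lia.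
- by rewrite Hid /inj_term Hco //= Hbd.
- by rewrite Hid.
- exists j; split; first lia.
  + rewrite /dimseg /rowseg.
    have -> : (h.-1).+1 - 1 = h.-1 by lia.
    apply/eq_in_map => l; rewrite mem_iota => Hl.
    rewrite /dimv /cartan /=; congr (nat_of_bool _).
    have -> : l <= j by rewrite /j; lia.
    have -> : l <= h.-1 by lia.
    rewrite andbT /=.
    have := galois Hjn (x:=l) ltac:(lia); rewrite -/s Hsj /GG => <-.
    done.
  + rewrite /dimseg; rewrite -[X in nseq X _](size_iota h (n.+1 - h)).
    apply: map_zero => l; rewrite mem_iota /dimv /= => Hl.
    have -> : (l <= h.-1) = false by apply/negbTE; rewrite -ltnNge; lia.
    by rewrite andbF.
- move=> l Hl; rewrite /dimv /=.
  have -> : (l <= h.-1) = false by apply/negbTE; rewrite -ltnNge; lia.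
  by rewrite andbF.
Qed.
End K.

Unset Implicit Arguments.

Theorem lemma3p3 (n : nat) (c : nat -> nat) (i : nat) :
  kupisch n c -> 1 <= i <= n -> 2 <= eS n c i ->
  exists M : imod,
    [/\ ind_mod n c M,
        inj_term c M (idim n c M) = Some (Imod c i),
        idim n c M = (eS n c i).-1,
        (exists j, [/\ i < j <= n,
            dimseg M 1 (hhat n c i).-1 = rowseg (cartan c) j (hhat n c i).-1 &
            dimseg M (hhat n c i) n = nseq (n.+1 - hhat n c i) 0])
      & forall l, hhat n c i <= l -> dimv M l = 0].
Proof.
move=> Hk Hi He; exact: (main Hk Hi He).
Qed.
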